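(* Let $\kappa=[2\ell-1]$ with $\ell\in\mathbb Z$. Then $\mathfrak g^{(n)}(\kappa)\in\mathbb Z[q,q^{-1}]$ for all $n\in\mathbb N$.
   Context: $q$ is an indeterminate, $[n]=\frac{q^n-q^{-n}}{q-q^{-1}}$ for $n\in\mathbb Z$, $[n]!=[1]\cdots[n]$, $[0]!=1$. The polynomials $\mathfrak g_n(x)$ are $\mathfrak g_{2m}(x)=\prod_{i=1}^{m}(x^2-[2i-1]^2)$ and $\mathfrak g_{2m+1}(x)=x\prod_{i=1}^m(x^2-[2i-1]^2)$, and $\mathfrak g^{(n)}=\mathfrak g_n/[n]!$. *)

(* Defs.v *)
From mathcomp Require Import all_boot all_order all_algebra.
Set Implicit Arguments. Unset Strict Implicit. Unset Printing Implicit Defensive.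
Import Order.TTheory GRing.Theory Num.Theory.
Local Open Scope ring_scope.

(* The ambient field: rational functions Q(q) realised as the fraction field of Z[q]. *)
Definition K : fieldType := {fraction {poly int}}.

Definition toK (p : {poly int}) : K := FracField.tofrac p.

Definition qq : K := toK 'X.

Definition qint (n : int) : K := (qq ^ n - qq ^ (- n)) / (qq - qq^-1).

Definition qfact (n : nat) : K := \prod_(1 <= i < n.+1) qint (i%:Z).

(* g_{2m}(x) = prod_{i=1}^m (x^2 - [2i-1]^2), g_{2m+1}(x) = x * prod_{i=1}^m (x^2 - [2i-1]^2) *)
Definition gpoly (n : nat) (x : K) : K :=
  (if odd n then x else 1) *
  \prod_(1 <= i < (n./2).+1) (x ^+ 2 - qint (2 * (i%:Z) - 1) ^+ 2).

Definition gdiv (n : nat) (x : K) : K := gpoly n x / qfact n.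

(* membership in Z[q, q^-1] inside K *)
Definition laurent (x : K) : Prop :=
  exists (p : {poly int}) (k : nat), x = toK p / qq ^+ k.

(* Main.v *)
Require Import Defs.
From mathcomp Require Import all_boot all_order all_algebra.
From mathcomp Require Import ring lra zify.
Set Implicit Arguments. Unset Strict Implicit. Unset Printing Implicit Defensive.
Import Order.TTheory GRing.Theory Num.Theory.
Local Open Scope ring_scope.

Lemma qq_neq0 : qq != 0.
Proof. by rewrite /qq /toK tofrac_eq0 polyX_eq0. Qed.

Lemma qqXn_neq1 (n : nat) : (0 < n)%N -> qq ^+ n != 1.
Proof.
move=> n0; rewrite /qq /toK -tofracXn -tofrac1 tofrac_eq.
apply/eqP => /(congr1 (size : {poly int} -> nat)).
by rewrite size_polyXn size_poly1; case: n n0.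
Qed.

Lemma den_neq0 : qq - qq^-1 != 0.
Proof.
have h := qq_neq0.
apply/eqP => e.
have : qq ^+ 2 = 1.
  have : (qq - qq^-1) * qq = 0 by rewrite e mul0r.
  rewrite mulrBl mulVf // => /eqP; rewrite subr_eq0 => /eqP; by rewrite expr2.
by apply/eqP; apply: qqXn_neq1.
Qed.

Lemma qint_add_gen (F : fieldType) (u v d : F) : u != 0 -> v != 0 -> d != 0 ->
  (u * v - (u^-1 * v^-1)) / d = v * ((u - u^-1) / d) + u^-1 * ((v - v^-1)/d).
Proof. move=> *; field; by apply/and3P. Qed.
Lemma qint_add a b : qint (a + b) = qq ^ b * qint a + qq ^ (- a) * qint b.
Proof.
rewrite /qint opprD !expfzDr ?qq_neq0 // -!invr_expz.
apply: qint_add_gen; [exact: expfz_neq0 qq_neq0|exact: expfz_neq0 qq_neq0|exact: den_neq0].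
Qed.
Lemma gen2 (F : fieldType) (u d : F) : u != 0 -> d != 0 ->
  (u * u - (u^-1 * u^-1)) / d = (u - u^-1) / d * (u + u^-1).
Proof. move=> *; field; by apply/andP. Qed.

Lemma gensq (F : fieldType) (u v d : F) : u != 0 -> v != 0 -> d != 0 ->
  ((u - u^-1) / d) ^+ 2 - ((v - v^-1) / d) ^+ 2 =
  (u * v - (u^-1 * v^-1)) / d * ((u * v^-1 - (v * u^-1)) / d).
Proof. move=> *; field; by apply/and3P. Qed.

Lemma qint0 : qint 0 = 0.
Proof. by rewrite /qint oppr0 subrr mul0r. Qed.

Lemma qint2 (n : int) : qint (2 * n) = qint n * (qq ^ n + qq ^ (- n)).
Proof.
have -> : 2 * n = n + n by rewrite mulrDl mul1r.
rewrite /qint opprD !expfzDr ?qq_neq0 // -!invr_expz.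
apply: gen2; [exact: expfz_neq0 qq_neq0|exact: den_neq0].
Qed.

Lemma qint_sq a b : qint a ^+ 2 - qint b ^+ 2 = qint (a + b) * qint (a - b).
Proof.
rewrite /qint opprB opprD !expfzDr ?qq_neq0 // -!invr_expz.
apply: gensq; [exact: expfz_neq0 qq_neq0|exact: expfz_neq0 qq_neq0|exact: den_neq0].
Qed.

Lemma qint_neq0 (n : nat) : (0 < n)%N -> qint n%:Z != 0.
Proof.
move=> n0; rewrite /qint mulf_eq0 invr_eq0 (negPf den_neq0) orbF subr_eq0.
apply/eqP => e.
have : qq ^+ (n + n) = 1.
  rewrite exprD.
  have -> : qq ^+ n = qq ^ n%:Z by [].
  rewrite {2}e -exprnN.
  rewrite mulfV //; exact: expf_neq0 qq_neq0.
by apply/eqP; apply: qqXn_neq1; rewrite addn_gt0 n0.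
Qed.
Lemma qqk_neq0 k : qq ^+ k != 0.
Proof. exact: expf_neq0 qq_neq0. Qed.

Lemma laurent_toK p : laurent (toK p).
Proof. by exists p, 0%N; rewrite expr0 divr1. Qed.



Lemma laurentM x y : laurent x -> laurent y -> laurent (x * y).
Proof.
move=> [p [k ->]] [p' [k' ->]]; exists (p * p'), (k + k')%N.
by rewrite /toK tofracM exprD invfM mulrACA.
Qed.

Lemma genD (F : fieldType) (a b u v : F) : u != 0 -> v != 0 ->
  a / u + b / v = (a * v + b * u) / (u * v).
Proof. move=> *; field; by apply/andP. Qed.

Lemma laurentD x y : laurent x -> laurent y -> laurent (x + y).
Proof.
move=> [p [k ->]] [p' [k' ->]]; exists (p * 'X^k' + p' * 'X^k), (k + k')%N.
rewrite /toK tofracD !tofracM !tofracXn -/(toK 'X) -/qq exprD.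
by apply: genD; apply: qqk_neq0.
Qed.
Lemma laurentN x : laurent x -> laurent (- x).
Proof.
move=> [p [k ->]]; exists (- p), k.
by rewrite /toK tofracN mulNr.
Qed.

Lemma laurentB x y : laurent x -> laurent y -> laurent (x - y).
Proof. by move=> hx hy; apply: laurentD => //; apply: laurentN. Qed.

Lemma laurent0 : laurent 0.
Proof. by rewrite -(tofrac0 _ : toK 0 = 0); apply: laurent_toK. Qed.

Lemma laurent_qz (z : int) : laurent (qq ^ z).
Proof.
case: z => n.
  by exists ('X^n), 0%N; rewrite expr0 divr1 /toK tofracXn.
by exists 1, n.+1; rewrite NegzE -exprnN /toK tofrac1 div1r.
Qed.


Definition P (c : int) (n : nat) : K := \prod_(i < n) qint (2 * (c + i%:Z)).
Definition G (c : int) (n : nat) : K := P c n / qfact n.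

Lemma qfactS n : qfact n.+1 = qfact n * qint n.+1%:Z.
Proof. by rewrite /qfact big_nat_recr. Qed.

Lemma qfact_neq0 n : qfact n != 0.
Proof.
elim: n => [|n IH].
  rewrite /qfact big_geq //; exact: oner_neq0.
rewrite qfactS; apply: mulf_neq0; first exact: IH.
exact: qint_neq0.
Qed.

Lemma P_recl c n : P c n.+1 = qint (2 * c) * P (c + 1) n.
Proof.
rewrite /P big_ord_recl addr0; congr (_ * _); apply: eq_bigr => i _.
rewrite lift0; congr (qint _); lia.
Qed.

Lemma P_recr c n : P c n.+1 = P c n * qint (2 * (c + n%:Z)).
Proof. by rewrite /P big_ord_recr. Qed.

Lemma P0 n : P 0 n.+1 = 0.
Proof. by rewrite P_recl mulr0 qint0 mul0r. Qed.

Lemma genrec (F : fieldType) (A f m a x y s : F) : f != 0 -> m != 0 ->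
  A * (x * a + y * (m * s)) / (f * m) = x * (a * A / (f * m)) + y * s * (A / f).
Proof. move=> *; field; by apply/andP. Qed.

Lemma G_rec c k : G (c + 1) k.+1 = qq ^ (2 * k.+1%:Z) * G c k.+1 +
   qq ^ (- (2 * c)) * (qq ^ k.+1%:Z + qq ^ (- k.+1%:Z)) * G (c + 1) k.
Proof.
rewrite /G P_recr P_recl qfactS.
have -> : 2 * (c + 1 + k%:Z) = 2 * c + 2 * k.+1%:Z by lia.
rewrite qint_add (qint2 k.+1%:Z).
apply: genrec; [exact: qfact_neq0 | exact: qint_neq0].
Qed.

Lemma G_laurent n : forall c, laurent (G c n).
Proof.
elim: n => [|k IH] c.
  by rewrite /G /P big_ord0 /qfact big_geq // divr1 -(tofrac1 _ : toK 1 = 1); apply: laurent_toK.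
have key : forall c, laurent (G c k.+1) <-> laurent (G (c + 1) k.+1).
  move=> d; rewrite G_rec; split => h.
    apply: laurentD; first by apply: laurentM => //; apply: laurent_qz.
    apply: laurentM => //; apply: laurentM; first exact: laurent_qz.
    by apply: laurentD; apply: laurent_qz.
  have -> : G d k.+1 = qq ^ (- (2 * k.+1%:Z)) * (qq ^ (2 * k.+1%:Z) * G d k.+1 +
   qq ^ (- (2 * d)) * (qq ^ k.+1%:Z + qq ^ (- k.+1%:Z)) * G (d + 1) k -
   qq ^ (- (2 * d)) * (qq ^ k.+1%:Z + qq ^ (- k.+1%:Z)) * G (d + 1) k).
    by rewrite addrK mulrA -expfzDr ?qq_neq0 // addNr expr0z mul1r.
  apply: laurentM; first exact: laurent_qz.
  apply: laurentB => //.
  apply: laurentM => //; apply: laurentM; first exact: laurent_qz.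
  by apply: laurentD; apply: laurent_qz.
have h0 : laurent (G 0 k.+1) by rewrite /G P0 mul0r; exact: laurent0.
have hn : forall m : nat, laurent (G m%:Z k.+1) /\ laurent (G (- m%:Z) k.+1).
  elim=> [|m [IH1 IH2]]; first by split.
  split.
    have -> : m.+1%:Z = m%:Z + 1 by lia.
    by apply/(key m%:Z).
  apply/(key (- m.+1%:Z)); have -> : - (m.+1%:Z) + 1 = - m%:Z by lia.
  exact: IH2.
case: c => m; first exact: (hn m).1.
by rewrite NegzE; exact: (hn m.+1).2.
Qed.

Lemma gprod (l : int) (m : nat) :
  \prod_(1 <= i < m.+1) (qint (2 * l - 1) ^+ 2 - qint (2 * (i%:Z) - 1) ^+ 2)
  = P (l - m%:Z) (m.*2).
Proof.
elim: m => [|m IH].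
  by rewrite big_geq // /P big_ord0.
rewrite big_nat_recr //= IH qint_sq.
rewrite doubleS P_recl P_recr.
have -> : l - m.+1%:Z + 1 = l - m%:Z by lia.
have -> : 2 * l - 1 + (2 * m.+1%:Z - 1) = 2 * (l - m%:Z + (m.*2)%:Z) by lia.
have -> : 2 * l - 1 - (2 * m.+1%:Z - 1) = 2 * (l - m.+1%:Z) by lia.
by rewrite mulrA mulrC mulrA.
Qed.

Lemma gen_odd (F : fieldType) (x a y s Pm f : F) : f != 0 -> s != 0 ->
  (x * a + y * s) * Pm / (f * s) = x * (a * Pm / (f * s)) + y * (Pm / f).
Proof. move=> *; field; by apply/andP. Qed.

Lemma even_case l m : laurent (gdiv (m.*2) (qint (2 * l - 1))).
Proof.
rewrite /gdiv /gpoly odd_double doubleK mul1r gprod.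
exact: G_laurent.
Qed.

Lemma odd_case l m : laurent (gdiv (m.*2).+1 (qint (2 * l - 1))).
Proof.
rewrite /gdiv /gpoly /= odd_double /= uphalf_double gprod qfactS.
have -> : 2 * l - 1 = 2 * (l - m%:Z - 1) + (m.*2).+1%:Z by lia.
rewrite qint_add.
have e : G (l - m%:Z - 1) (m.*2).+1 =
  qint (2 * (l - m%:Z - 1)) * P (l - m%:Z) (m.*2) / (qfact (m.*2) * qint (m.*2).+1%:Z).
  by rewrite /G P_recl qfactS subrK.
rewrite gen_odd; last exact: qint_neq0; last exact: qfact_neq0.
rewrite -e -/(G _ _).
apply: laurentD; apply: laurentM; (try exact: laurent_qz); exact: G_laurent.
Qed.

Theorem lemma4p3 (l : int) (n : nat) :
  laurent (gdiv n (qint (2 * l - 1))).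
Proof.
rewrite -(odd_double_half n); case: (odd n).
  rewrite add1n; exact: odd_case.
rewrite add0n; exact: even_case.
Qed.
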